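(* Let $\mathcal{G}$ be a finite set of classes, let $\alpha>1$, and let $f:\mathbb{R}^{q\times n}\to\mathbb{R}^n$ be an $(R, D_\alpha, \gamma, \beta, k, \|\cdot\|)$-faithful attention module for a ViT. Fix an input $x$, and for each class $i$ let $p_i$ be the probability that the prediction distribution $\bar{y}(x)$ returns the $i$-th class; let $p_{(1)}$ and $p_{(2)}$ be the largest and second largest values among $\{p_i\}$. If $$\gamma \leq -\log\Big(1 - p_{(1)} - p_{(2)} + 2\big(\tfrac{1}{2}(p_{(1)}^{1-\alpha} + p_{(2)}^{1-\alpha})\big)^{\frac{1}{1-\alpha}}\Big),$$ then for all $x'$ with $\|x-x'\|\leq R$ we have $\arg\max_{g\in\mathcal{G}}\mathbb{P}(\bar{y}(x)=g)=\arg\max_{g\in\mathcal{G}}\mathbb{P}(\bar{y}(x')=g)$.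
   Context: A Vision Transformer (ViT) takes an input image represented as a token-embedding matrix $x\in\mathbb{R}^{q\times n}$ ($n$ patches, each embedded in $\mathbb{R}^q$). An attention module is a map $f:\mathbb{R}^{q\times n}\to\mathbb{R}^n$ producing an attention vector; the ViT's later layers map the attention-based representation to a prediction distribution $\bar{y}(x)$ over the class set $\mathcal{G}$ (written $\bar y(x)$ when it is based on $f(x)$). For $v\in\mathbb{R}^n$, the top-$k$ set is $T_k(v)=\{i\in[n]: |\{j\in[n]: v_j\geq v_i\}|\leq k\}$, and for $v,v'\in\mathbb{R}^n$ the top-$k$ overlap ratio is $V_k(v,v')=\frac{1}{k}|T_k(v)\cap T_k(v')|$. For distributions $P,Q$ and $\alpha\in(1,\infty)$, the $\alpha$-Rényi divergence is $D_\alpha(P\|Q)=\frac{1}{\alpha-1}\log\mathbb{E}_{x\sim Q}\big(\frac{P(x)}{Q(x)}\big)^\alpha$. A function $f:\mathbb{R}^{q\times n}\to\mathbb{R}^n$ is an $(R,D,\gamma,\beta,k,\|\cdot\|)$-faithful attention module for ViTs (with $0<\beta<1$, $D$ a divergence between distributions, $\|\cdot\|$ a norm on $\mathbb{R}^{q\times n}$) if for every input $x$ and every $x'$ with $\|x-x'\|\leq R$: (1) (top-$k$ robustness) $V_k(f(x'),f(x))\geq\beta$; and (2) (prediction robustness) $D(\bar{y}(x),\bar{y}(x'))\leq\gamma$, where $\bar{y}(x),\bar{y}(x')$ are the ViT's prediction distributions based on $f(x), f(x')$. *)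

(* Defs.v *)
From HB Require Import structures.
From mathcomp Require Import all_boot all_order all_algebra.
From mathcomp Require Import reals constructive_ereal ereal exp.
Set Implicit Arguments. Unset Strict Implicit. Unset Printing Implicit Defensive.
Import Order.TTheory GRing.Theory Num.Theory.
Local Open Scope ring_scope.

Section Defs.
Variable R : realType.

Definition is_norm (q n : nat) (N : 'M[R]_(q, n) -> R) : Prop :=
  [/\ forall x, 0 <= N x,
      forall x, N x = 0 -> x = 0,
      forall (a : R) x, N (a *: x) = `|a| * N x
    & forall x y, N (x + y) <= N x + N y].

Definition is_distr (G : finType) (P : {ffun G -> R}) : Prop :=
  (forall g, 0 <= P g) /\ \sum_(g : G) P g = 1.

Definition topk (n k : nat) (v : 'rV[R]_n) : {set 'I_n} :=
  [set i : 'I_n | leq #|[set j : 'I_n | v ord0 i <= v ord0 j]| k].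

Definition topk_overlap (n k : nat) (v v' : 'rV[R]_n) : R :=
  (#|topk k v :&: topk k v'|)%:R / k%:R.

Definition renyi_div (G : finType) (alpha : R) (P Q : {ffun G -> R}) : \bar R :=
  if [exists g, (Q g == 0) && (P g != 0)] then +oo%E
  else ((alpha - 1)^-1 *
        ln (\sum_(g : G | Q g != 0) Q g * (P g / Q g) `^ alpha))%:E.

(* (R, D, gamma, beta, k, N)-faithful attention module f, where the ViT's
   prediction distribution based on f(x) is  head x (f x). *)
Definition faithful_attention (q n : nat) (G : finType)
    (head : 'M[R]_(q, n) -> 'rV[R]_n -> {ffun G -> R})
    (Rad : R) (D : {ffun G -> R} -> {ffun G -> R} -> \bar R)
    (gamma beta : R) (k : nat) (N : 'M[R]_(q, n) -> R)
    (f : 'M[R]_(q, n) -> 'rV[R]_n) : Prop :=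
  0 < beta < 1 /\
  forall x x' : 'M[R]_(q, n), N (x - x') <= Rad ->
    beta <= topk_overlap k (f x') (f x) /\
    (D (head x (f x)) (head x' (f x')) <= gamma%:E)%E.

Definition sorted_probs (G : finType) (P : {ffun G -> R}) : seq R :=
  sort (fun a b : R => b <= a) [seq P g | g <- enum G].

Definition p_top1 (G : finType) (P : {ffun G -> R}) : R := nth 0 (sorted_probs P) 0.
Definition p_top2 (G : finType) (P : {ffun G -> R}) : R := nth 0 (sorted_probs P) 1.

(* power mean (1/2 (a^(1-alpha) + b^(1-alpha)))^(1/(1-alpha)) with the standard
   convention (limit) that it is 0 when one argument is 0 (exponent 1-alpha < 0). *)
Definition pmean (alpha a b : R) : R :=
  if (a == 0) || (b == 0) then 0
  else (2^-1 * (a `^ (1 - alpha) + b `^ (1 - alpha))) `^ (1 - alpha)^-1.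

Definition renyi_bound (alpha p1 p2 : R) : \bar R :=
  let a := 1 - p1 - p2 + 2 * pmean alpha p1 p2 in
  if a == 0 then +oo%E else (- ln a)%:E.

Definition is_argmax (G : finType) (P : {ffun G -> R}) (g : G) : Prop :=
  forall h, P h <= P g.

End Defs.

(* Main.v *)
Require Import Defs.
From HB Require Import structures.
From mathcomp Require Import all_boot all_order all_algebra.
From mathcomp Require Import reals constructive_ereal ereal exp.
From mathcomp Require Import ring lra.
Import Order.TTheory GRing.Theory Num.Theory.
Local Open Scope ring_scope.


Lemma young_pos (R : realType) (a u : R) : 1 < a -> 0 <= u ->
  1 + a * (u - 1) <= u `^ a.
Proof.
move=> a1 u0.
have a0 : 0 < a by lra.
have q0 : 0 < a / (a - 1) by apply: divr_gt0; lra.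
have := @conjugate_powR R u 1 a (a / (a - 1)) u0 ler01 a0 q0.
rewrite powR1 mulr1.
have -> : a^-1 + (a / (a - 1))^-1 = 1.
  by field; apply/andP; split; apply/eqP; lra.
move=> /(_ erefl).
set X := u `^ a.
have -> : X / a + 1 / (a / (a - 1)) = (X + a - 1) / a.
  by field; apply/andP; split; apply/eqP; lra.
rewrite ler_pdivlMr //; lra.
Qed.

Lemma young_neg (R : realType) (k u : R) : k < 0 -> 0 < u ->
  1 + k * (u - 1) <= u `^ k.
Proof.
move=> k0 u0.
have p0 : 0 < 1 - k by lra.
have q0 : 0 < (1 - k) / (- k) by apply: divr_gt0; lra.
have := @conjugate_powR R (u `^ (k / (1 - k))) (u `^ (- k / (1 - k))) (1 - k)
  ((1 - k) / (- k)) (powR_ge0 _ _) (powR_ge0 _ _) p0 q0.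
have -> : (1 - k)^-1 + ((1 - k) / (- k))^-1 = 1.
  by field; apply/andP; split; apply/eqP; lra.
move=> /(_ erefl).
rewrite -powRD; last by apply/implyP => _; rewrite gt_eqF.
have -> : k / (1 - k) + - k / (1 - k) = 0 by field; apply/eqP; lra.
rewrite powRr0 -!powRrM.
have -> : k / (1 - k) * (1 - k) = k by field; apply/eqP; lra.
have -> : - k / (1 - k) * ((1 - k) / - k) = 1 by field; apply/andP; split; apply/eqP; lra.
rewrite powRr1; last lra.
set X := u `^ k.
have -> : X / (1 - k) + u / ((1 - k) / - k) = (X - k * u) / (1 - k).
  by field; apply/andP; split; apply/eqP; lra.
rewrite ler_pdivlMr //; lra.
Qed.

Lemma homog_tangent (R : realType) (r v w : R) : 0 < v -> 0 <= w ->
  1 + r * (w / v - 1) <= (w / v) `^ r ->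
  v `^ r + r * v `^ (r - 1) * (w - v) <= w `^ r.
Proof.
move=> v0 w0 N.
rewrite powRB; last by apply/implyP => _; rewrite gt_eqF.
rewrite powRr1; last lra.
have -> : w = v * (w / v) by field; apply/eqP; lra.
rewrite powRM; [|lra|by apply: divr_ge0; lra].
have vr0 : 0 <= v `^ r by apply: powR_ge0.
have := ler_wpM2l vr0 N.
have -> : v `^ r * (1 + r * (w / v - 1)) = v `^ r + r * (v `^ r / v) * (v * (w / v) - v).
  by field; apply/eqP; lra.
by [].
Qed.

Lemma homog_tangent_lt (R : realType) (r v w : R) : 0 < v -> 0 <= w ->
  1 + r * (w / v - 1) < (w / v) `^ r ->
  v `^ r + r * v `^ (r - 1) * (w - v) < w `^ r.
Proof.
move=> v0 w0 N.
rewrite powRB; last by apply/implyP => _; rewrite gt_eqF.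
rewrite powRr1; last lra.
have -> : w = v * (w / v) by field; apply/eqP; lra.
rewrite powRM; [|lra|by apply: divr_ge0; lra].
have vr0 : 0 < v `^ r by apply: powR_gt0.
have := ltr_pM2l vr0; move=> /(_ _ _) H; move: N; rewrite -H => N.
move: N.
have -> : v `^ r * (1 + r * (w / v - 1)) = v `^ r + r * (v `^ r / v) * (v * (w / v) - v).
  by field; apply/eqP; lra.
by [].
Qed.

Lemma tangent_pos (R : realType) (a v w : R) : 1 < a -> 0 < v -> 0 <= w ->
  v `^ a + a * v `^ (a - 1) * (w - v) <= w `^ a.
Proof.
move=> a1 v0 w0; apply: homog_tangent => //; apply: young_pos => //.
by apply: divr_ge0; lra.
Qed.

Lemma tangent_neg (R : realType) (k v w : R) : k < 0 -> 0 < v -> 0 < w ->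
  v `^ k + k * v `^ (k - 1) * (w - v) <= w `^ k.
Proof.
move=> k0 v0 w0; apply: homog_tangent => //; first lra.
by apply: young_neg => //; apply: divr_gt0.
Qed.

Lemma young_pos_lt (R : realType) (a u : R) : 1 < a -> 0 <= u -> u != 1 ->
  1 + a * (u - 1) < u `^ a.
Proof.
move=> a1 u0 u1.
set m := (1 + u) / 2.
have m0 : 0 < m by rewrite /m; lra.
have T := @tangent_pos _ a m u a1 m0 u0.
have N := @young_pos _ a m a1 (ltW m0).
set Y := m `^ (a - 1) in T.
have hp : 0 < a * ((Y - 1) * (u - m)).
  apply: mulr_gt0; first lra.
  have a10 : 0 < a - 1 by lra.
  case: (ltgtP u 1) => [ult|ugt|ue]; last by rewrite ue eqxx in u1.
  - have mlt : m < 1 by rewrite /m; lra.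
    have : Y < 1.
      have := @gt0_ltr_powR R (a - 1) a10 m 1.
      rewrite powR1 => ->//; rewrite nnegrE; lra.
    move=> Y1; have : u - m < 0 by rewrite /m; lra.
    move=> um; nra.
  - have mgt : 1 < m by rewrite /m; lra.
    have : 1 < Y.
      have := @gt0_ltr_powR R (a - 1) a10 1 m.
      rewrite powR1 => ->//; rewrite nnegrE; lra.
    move=> Y1; apply: mulr_gt0; rewrite ?/m; lra.
lra.
Qed.

Lemma tangent_pos_lt (R : realType) (a v w : R) : 1 < a -> 0 < v -> 0 <= w ->
  w != v -> v `^ a + a * v `^ (a - 1) * (w - v) < w `^ a.
Proof.
move=> a1 v0 w0 wv; apply: homog_tangent_lt => //; apply: young_pos_lt => //.
  by apply: divr_ge0; lra.
apply/negP => /eqP E; move: wv.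
have -> : w = v * (w / v) by field; apply/eqP; lra.
by rewrite E mulr1 eqxx.
Qed.


Lemma pform (R : realType) (a p q l : R) : 1 < a -> 0 < p -> 0 <= q -> 0 < l ->
  (1 - a) * (l `^ (a - 1) * l) * p + a * l `^ (a - 1) * q <= p * (q / p) `^ a.
Proof.
move=> a1 p0 q0 l0.
have T := @tangent_pos _ a l (q / p) a1 l0 (divr_ge0 q0 (ltW p0)).
have E : l `^ a = l `^ (a - 1) * l.
  rewrite powRB; last by apply/implyP => _; rewrite gt_eqF.
  by rewrite powRr1 ?ltW //; field; apply/eqP; lra.
rewrite E in T.
have := ler_wpM2l (ltW p0) T.
have -> : p * (l `^ (a - 1) * l + a * l `^ (a - 1) * (q / p - l)) =
   (1 - a) * (l `^ (a - 1) * l) * p + a * l `^ (a - 1) * q.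
  by field; apply/eqP; lra.
by [].
Qed.

Lemma pform_lt (R : realType) (a p q l : R) : 1 < a -> 0 < p -> 0 <= q -> 0 < l ->
  q != l * p ->
  (1 - a) * (l `^ (a - 1) * l) * p + a * l `^ (a - 1) * q < p * (q / p) `^ a.
Proof.
move=> a1 p0 q0 l0 ql.
have qpl : q / p != l.
  apply/negP => /eqP E; move: ql; rewrite -E.
  have -> : q / p * p = q by field; apply/eqP; lra.
  by rewrite eqxx.
have T := @tangent_pos_lt _ a l (q / p) a1 l0 (divr_ge0 q0 (ltW p0)) qpl.
have E : l `^ a = l `^ (a - 1) * l.
  rewrite powRB; last by apply/implyP => _; rewrite gt_eqF.
  by rewrite powRr1 ?ltW //; field; apply/eqP; lra.
rewrite E in T.
have := T; rewrite -(ltr_pM2l p0).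
have -> : p * (l `^ (a - 1) * l + a * l `^ (a - 1) * (q / p - l)) =
   (1 - a) * (l `^ (a - 1) * l) * p + a * l `^ (a - 1) * q.
  by field; apply/eqP; lra.
by [].
Qed.

Lemma chord (R : realType) (k a v x : R) : k < 0 -> 0 < a -> a <= v -> v <= x ->
  (x - a) * v `^ k <= (x - v) * a `^ k + (v - a) * x `^ k.
Proof.
move=> k0 a0 av vx.
have v0 : 0 < v by lra.
have T1 := @tangent_neg _ k v a k0 v0 a0.
have T2 := @tangent_neg _ k v x k0 v0 (lt_le_trans v0 vx).
have h1 := ler_wpM2l (ltac:(lra) : 0 <= x - v) T1.
have h2 := ler_wpM2l (ltac:(lra) : 0 <= v - a) T2.
nra.
Qed.

Lemma kara (R : realType) (k P y x : R) : k < 0 -> 0 < P -> P <= y -> y <= x ->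
  2 * (2^-1 * (P + x)) `^ k + y `^ k <= 2 * (2^-1 * (P + y)) `^ k + x `^ k.
Proof.
move=> k0 P0 Py yx.
case: (eqVneq y x) => [->|yx']; first lra.
have yx2 : y < x by rewrite lt_neqAle yx' yx.
have a0 : 0 < 2^-1 * (P + y) by lra.
have C1 := @chord _ k (2^-1 * (P + y)) (2^-1 * (P + x)) x k0 a0
  ltac:(lra) ltac:(lra).
have C2 := @chord _ k (2^-1 * (P + y)) y x k0 a0 ltac:(lra) ltac:(lra).
have xa : 0 < x - 2^-1 * (P + y) by lra.
rewrite -(ler_pM2l xa).
nra.
Qed.

Lemma powR_neg_le (R : realType) (r a b : R) : r < 0 -> 0 < a -> a <= b ->
  b `^ r <= a `^ r.
Proof.
move=> r0 a0 ab.
have e : forall z : R, z `^ r = (z `^ (- r))^-1 by move=> z; rewrite -powRN opprK.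
rewrite !e.
have ha : 0 < a `^ (- r) by apply: powR_gt0.
have hb : 0 < b `^ (- r) by apply: powR_gt0; lra.
rewrite lef_pV2 ?posrE //.
have H := @ge0_ler_powR R (- r) ltac:(lra) a b.
rewrite /= in H; apply: H; rewrite ?nnegrE; lra.
Qed.

Lemma mono_pm (R : realType) (be p t t' : R) : be < 0 -> 0 < t -> t <= t' -> t' <= p ->
  - t + 2 * (2^-1 * (p `^ be + t `^ be)) `^ (be^-1) <=
  - t' + 2 * (2^-1 * (p `^ be + t' `^ be)) `^ (be^-1).
Proof.
move=> b0 t0 tt' t'p.
have back : forall z, 0 < z -> (z `^ be) `^ (be^-1) = z.
  move=> z z0; rewrite -powRrM mulfV ?lt_eqF // powRr1 //; lra.
have k0 : be^-1 < 0 by rewrite invr_lt0.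
have K := @kara _ (be^-1) (p `^ be) (t' `^ be) (t `^ be) k0 (powR_gt0 _ _)
  (@powR_neg_le _ be t' p b0 ltac:(lra) t'p) (@powR_neg_le _ be t t' b0 t0 tt').
rewrite !back in K; try lra.
Qed.


Lemma top_props (R : realType) (G : finType) (P : {ffun G -> R}) (g h : G) :
  (forall i, 0 <= P i) -> (forall i, P i <= P g) -> h != g ->
  [/\ p_top1 P = P g, P h <= p_top2 P & p_top2 P <= p_top1 P].
Proof.
move=> P0 Pg hg.
rewrite /p_top1 /p_top2 /sorted_probs.
set s := sort _ _.
have Hp : perm_eq s [seq P i | i <- enum G] by rewrite /s perm_sort.
have Hs : sorted (fun a b : R => b <= a) s.
  by apply: sort_sorted => a b; exact: le_total.
have Hm : forall v, (v \in s) = (v \in [seq P i | i <- enum G]) by apply: perm_mem.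
have gin : P g \in s by rewrite Hm; apply: map_f; rewrite mem_enum.
have tr : transitive (fun a b : R => b <= a) by move=> a b c ab bc; exact: le_trans bc ab.
case Es : s gin Hs Hm Hp => [|x0 s'] // gin Hs Hm Hp.
have Hall := order_path_min tr Hs.
have x0e : x0 = P g.
  apply/eqP; rewrite eq_le; apply/andP; split.
    have : x0 \in [seq P i | i <- enum G] by rewrite -Hm mem_head.
    by case/mapP => i _ ->.
  move: gin; rewrite in_cons => /orP[/eqP -> //|gs'].
  by move/allP: Hall => /(_ _ gs').
have top2le : nth 0 (x0 :: s') 1 <= x0.
  case: s' Hall {Hs Hm Hp gin Es} => [|x1 s''] /= Hall; first by rewrite x0e.
  by case/andP: Hall.
split => //.
have cnt1 : (count (fun v : R => (nth 0 (x0 :: s') 1 < v)%R) (x0 :: s') <= 1)%N.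
  case: s' Hs {Hall Hm Hp gin Es top2le} => [|x1 s''] /= Hs.
    by case: (_ < _).
  rewrite ltxx add0n.
  case/andP: Hs => _ Hs.
  have := order_path_min tr Hs => /allP Ha.
  have -> : count (fun v : R => x1 < v) s'' = 0%N.
    apply/eqP; rewrite -leqn0 leqNgt -has_count; apply/hasP => -[v vs /= lt].
    by have := Ha v vs; rewrite leNgt lt.
  by case: (_ < _).
rewrite leNgt; apply/negP => ch.
set c := nth 0 (x0 :: s') 1 in ch top2le cnt1.
have cnt2 : (2 <= count (fun v : R => (c < v)%R) [seq P i | i <- enum G])%N.
  rewrite count_map.
  have gE : g \in enum G by rewrite mem_enum.
  rewrite ((permP (perm_to_rem gE)) _) /=.
  have -> : c < P g by apply: lt_le_trans ch (Pg h).
  rewrite add1n ltnS -has_count; apply/hasP; exists h => //.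
  by rewrite (mem_rem_uniq _ (enum_uniq G)) inE hg mem_enum.
have := (permP Hp) (fun v : R => (c < v)%R).
move=> E; move: cnt1; rewrite E => c1.
by have := leq_trans cnt2 c1.
Qed.


Lemma main_ineq (R : realType) (G : finType) (a : R) (P Q : {ffun G -> R}) (g h : G) :
  1 < a -> (forall i, 0 <= P i) -> \sum_(i : G) P i = 1 ->
  (forall i, 0 <= Q i) -> \sum_(i : G) Q i = 1 ->
  (forall i, P i = 0 -> Q i = 0) -> 0 < P g -> 0 < P h -> P h <= P g ->
  h != g -> Q g < Q h ->
  (1 - P g - P h + 2 * (2^-1 * (P h `^ (1 - a) + P g `^ (1 - a))) `^ (1 - a)^-1)
     `^ (1 - a) <
  \sum_(i | P i != 0) P i * (Q i / P i) `^ a.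
Proof.
move=> a1 P0 P1 Q0 Q1 supp Pg0 Ph0 hle hg Hqh.
set be := 1 - a.
have be0 : be < 0 by rewrite /be; lra.
set M := (2^-1 * (P h `^ be + P g `^ be)) `^ be^-1.
have E1 : \sum_(i : G) P i = P g + P h + \sum_(i | (i != g) && (i != h)) P i.
  rewrite (bigD1 g) /=; last by [].
  rewrite (bigD1 h) /=; last exact: hg.
  by rewrite addrA.
have E2 : \sum_(i : G) Q i = Q g + Q h + \sum_(i | (i != g) && (i != h)) Q i.
  rewrite (bigD1 g) /=; last by [].
  rewrite (bigD1 h) /=; last exact: hg.
  by rewrite addrA.
move: E1 E2; rewrite P1 Q1.
set TP := \sum_(i | _) P i. set TQ := \sum_(i | _) Q i.
move=> E1 E2.
have TP0 : 0 <= TP by apply: sumr_ge0.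
have rest0 : 0 <= 1 - P g - P h by clear -E1 TP0; lra.
have X0 : 0 < 2^-1 * (P h `^ be + P g `^ be).
  have H1 : 0 < P h `^ be + P g `^ be by apply: addr_gt0; apply: powR_gt0.
  have H2 : 0 < (2:R)^-1 by rewrite invr_gt0.
  exact: mulr_gt0 H2 H1.
have M0 : 0 < M by apply: powR_gt0.
set W := 1 - P g - P h + 2 * M.
have W0 : 0 < W by rewrite /W; clear -M0 rest0; lra.
set c := W^-1.
have c0 : 0 < c by rewrite invr_gt0.
set K := c `^ (a - 1).
set mu := M `^ (a - 1).
set eg := P g `^ be. set eh := P h `^ be.
have K0 : 0 < K by apply: powR_gt0.
have mu0 : 0 < mu by apply: powR_gt0.
have F1 : mu * (eg + eh) = 2.
  rewrite /mu /M -powRrM.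
  have -> : be^-1 * (a - 1) = -1 by rewrite /be; field; apply/eqP; clear -a1; lra.
  rewrite powR_inv1; last exact: ltW.
  rewrite /eg /eh; field; apply/eqP.
  have : 0 < P h `^ be + P g `^ be by apply: addr_gt0; apply: powR_gt0.
  clear; lra.
have F2 : eg <= eh by apply: powR_neg_le.
have F3 : K = W `^ be.
  rewrite /K /c -powR_inv1; last exact: ltW.
  by rewrite -powRrM /be; congr (_ `^ _); ring.
have Lx : forall p, 0 < p -> (c * M / p) `^ (a - 1) = K * mu * p `^ be.
  move=> p p0.
  rewrite powRM; [|apply: mulr_ge0; apply: ltW => //|by rewrite invr_ge0; apply: ltW].
  rewrite powRM; [|exact: ltW|exact: ltW].
  rewrite -powR_inv1; last exact: ltW.
  by rewrite -powRrM /be; congr (_ * _ `^ _); ring.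
have lP : forall p, 0 < p -> c * M / p * p = c * M.
  by move=> p p0; field; apply/eqP; clear -p0; lra.
have lpos : forall p, 0 < p -> 0 < c * M / p.
  by move=> p p0; apply: divr_gt0 => //; apply: mulr_gt0.
rewrite (bigD1 g) /=; last by rewrite gt_eqF.
rewrite (bigD1 h) /=; last by rewrite (gt_eqF Ph0) hg.
set F := fun i => P i * (Q i / P i) `^ a.
set LB := fun i => (1 - a) * (K * c) * P i + a * K * Q i.
have Hrest : (1 - a) * (K * c) * TP + a * K * TQ <=
    \sum_(i | (P i != 0) && (i != g) && (i != h)) P i * (Q i / P i) `^ a.
  have -> : (1 - a) * (K * c) * TP + a * K * TQ =
      \sum_(i | (P i != 0) && (i != g) && (i != h)) LB i.
    have -> : \sum_(i | (P i != 0) && (i != g) && (i != h)) LB i =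
        \sum_(i | (i != g) && (i != h)) LB i.
      rewrite [RHS](bigID (fun i => P i != 0)) /=.
      rewrite [X in _ = _ + X]big1; last first.
        move=> i /andP[_ /negPn /eqP Pi]; rewrite /LB Pi (supp i Pi).
        by rewrite !mulr0 addr0.
      rewrite addr0; apply: eq_bigl => i.
      by rewrite [RHS]andbC andbA.
    rewrite /LB big_split /= -!mulr_sumr.
    by [].
  apply: ler_sum => i /andP[/andP[Pi _] _].
  have Pi0 : 0 < P i by rewrite lt_neqAle eq_sym Pi P0.
  rewrite /LB.
  have := @pform _ a (P i) (Q i) c a1 Pi0 (Q0 i) c0.
  by rewrite -/K.
set Y := \sum_(i | _) _ in Hrest *.
set LBg := (1 - a) * ((c * M / P g) `^ (a - 1) * (c * M / P g)) * P g +
    a * (c * M / P g) `^ (a - 1) * Q g.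
set LBh := (1 - a) * ((c * M / P h) `^ (a - 1) * (c * M / P h)) * P h +
    a * (c * M / P h) `^ (a - 1) * Q h.
have Fgh : LBg + LBh < P g * (Q g / P g) `^ a + P h * (Q h / P h) `^ a.
  have Hg := @pform _ a (P g) (Q g) (c * M / P g) a1 Pg0 (Q0 g) (lpos _ Pg0).
  have Hh := @pform _ a (P h) (Q h) (c * M / P h) a1 Ph0 (Q0 h) (lpos _ Ph0).
  case: (eqVneq (Q g) (c * M / P g * P g)) => Eg.
    have Hh' := @pform_lt _ a (P h) (Q h) (c * M / P h) a1 Ph0 (Q0 h) (lpos _ Ph0).
    have : Q h != c * M / P h * P h.
      by rewrite lP // -(lP _ Pg0) -Eg gt_eqF.
    move=> /Hh' {}Hh'.
    rewrite /LBg /LBh; move: Hg Hh'.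
    set u1 := _ * (_ `^ a); set u2 := _ * (_ `^ a).
    set v1 := _ + _; set v2 := _ + _.
    clear; lra.
  have Hg' := @pform_lt _ a (P g) (Q g) (c * M / P g) a1 Pg0 (Q0 g) (lpos _ Pg0) Eg.
  rewrite /LBg /LBh; move: Hg' Hh.
  set u1 := _ * (_ `^ a); set u2 := _ * (_ `^ a).
  set v1 := _ + _; set v2 := _ + _.
  clear; lra.
suff C : W `^ be <= LBg + LBh + ((1 - a) * (K * c) * TP + a * K * TQ).
  have D := ltr_leD Fgh Hrest.
  rewrite addrA.
  clear -C D; lra.
have TPE : TP = 1 - P g - P h by clear -E1; lra.
have TQE : TQ = 1 - Q g - Q h by clear -E2; lra.
have lP' : forall p X Z, 0 < p -> Z * (X * (c * M / p)) * p = Z * X * (c * M).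
  by move=> p X Z p0; field; apply/eqP; clear -p0; lra.
rewrite /LBg /LBh !Lx // !lP' // -/eg -/eh TPE TQE -F3.
have cW : c * (2 * M + 1 - P g - P h) = 1.
  by rewrite /c /W; field; apply/eqP; clear -W0; rewrite /W in W0; lra.
have Ech : Q g + Q h <= mu * (eg * Q g + eh * Q h).
  have h0 : 0 <= mu * ((eh - eg) * (Q h - Q g)).
    apply: mulr_ge0; first exact: ltW.
    apply: mulr_ge0; clear -F2 Hqh; lra.
  have := congr1 (fun z => z * (Q g + Q h)) F1; move=> /= F1q.
  move: h0 F1q; clear; lra.
have EE : (1 - a) * (K * mu * eg) * (c * M) + a * (K * mu * eg) * Q g +
    ((1 - a) * (K * mu * eh) * (c * M) + a * (K * mu * eh) * Q h) +
    ((1 - a) * (K * c) * (1 - P g - P h) + a * K * (1 - Q g - Q h)) =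
    (1 - a) * K * (c * (M * (mu * (eg + eh)) + 1 - P g - P h)) +
    a * K * (mu * (eg * Q g + eh * Q h) + 1 - Q g - Q h).
  by ring.
rewrite EE F1.
have -> : M * 2 + 1 - P g - P h = 2 * M + 1 - P g - P h by ring.
rewrite cW.
have aK : 0 < a * K by apply: mulr_gt0 => //; clear -a1; lra.
have := ler_wpM2l (ltW aK) (ltac:(clear -Ech; lra) : 1 <= mu * (eg * Q g + eh * Q h) + 1 - Q g - Q h).
move: (mu * (eg * Q g + eh * Q h) + 1 - Q g - Q h) => z.
clear; nra.
Qed.


Lemma fin_contra (R : realType) (t1 t2 gm v w : R) :
  t2 <= gm -> gm <= - w -> v <= w -> t1 < t2 -> t1 = - v -> False.
Proof. move=> *; lra. Qed.

Lemma core (R : realType) (G : finType) (alpha gamma : R) (P Q : {ffun G -> R})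
  (g h : G) : 1 < alpha -> is_distr P -> is_distr Q ->
  (renyi_div alpha Q P <= gamma%:E)%E ->
  (gamma%:E <= renyi_bound alpha (p_top1 P) (p_top2 P))%E ->
  is_argmax P g -> Q h <= Q g.
Proof.
move=> a1 [P0 P1] [Q0 Q1] HD Hb Hg.
rewrite leNgt; apply/negP => Hqh.
have hg : h != g by apply/eqP => E; rewrite E ltxx in Hqh.
move: HD; rewrite /renyi_div.
case: ifPn => [_|Hsupp]; first by rewrite leNgt ltey.
have supp : forall i, P i = 0 -> Q i = 0.
  move=> i Pi; move/existsPn: Hsupp => /(_ i); rewrite Pi eqxx /= negbK.
  by move/eqP.
rewrite lee_fin => HD.
have Pg0 : 0 < P g.
  rewrite lt_neqAle P0 andbT; apply/negP => /eqP E.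
  have : \sum_(i : G) P i = 0.
    by apply: big1 => i _; apply: le_anti; rewrite P0 andbT E; apply: Hg.
  by rewrite P1 => /eqP; rewrite oner_eq0.
have Ph0 : 0 < P h.
  rewrite lt_neqAle P0 andbT; apply/negP => /eqP E.
  by have := supp h (esym E); have := Q0 g; lra.
have [Et1 Hh2 H21] := @top_props _ _ P g h P0 Hg hg.
set p2 := p_top2 P in Hh2 H21 Hb.
have p20 : 0 < p2 by lra.
move: Hb; rewrite /renyi_bound /pmean Et1 (gt_eqF Pg0) (gt_eqF p20) /=.
set be := 1 - alpha.
have be0 : be < 0 by rewrite /be; lra.
set M2 := (2^-1 * (P g `^ be + p2 `^ be)) `^ be^-1.
set M := (2^-1 * (P h `^ be + P g `^ be)) `^ be^-1.
have EM : M = (2^-1 * (P g `^ be + P h `^ be)) `^ be^-1 by rewrite /M addrC.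
have mono := @mono_pm _ be (P g) (P h) p2 be0 Ph0 Hh2 ltac:(lra).
rewrite -/M2 -EM in mono.
have E1 : \sum_(i : G) P i = P g + P h + \sum_(i | (i != g) && (i != h)) P i.
  rewrite (bigD1 g) /=; last by [].
  rewrite (bigD1 h) /=; last exact: hg.
  by rewrite addrA.
have rest0 : 0 <= 1 - P g - P h.
  have : 0 <= \sum_(i | (i != g) && (i != h)) P i by apply: sumr_ge0.
  move: E1; rewrite P1.
  set T := \sum_(i | _) _.
  move=> E1 T0. clear -E1 T0. lra.
have M0 : 0 < M.
  rewrite /M; apply: powR_gt0.
  have H1 : 0 < P h `^ be + P g `^ be by apply: addr_gt0; apply: powR_gt0.
  have H2 : 0 < (2:R)^-1 by rewrite invr_gt0.
  exact: mulr_gt0 H2 H1.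
have W0 : 0 < 1 - P g - P h + 2 * M by clear -M0 rest0; lra.
have WW2 : 1 - P g - P h + 2 * M <= 1 - P g - p2 + 2 * M2 by clear -mono; lra.
set W := 1 - P g - P h + 2 * M in W0 WW2.
have W20 : 0 < 1 - P g - p2 + 2 * M2 by clear -W0 WW2; lra.
rewrite (gt_eqF W20).
rewrite lee_fin => Hb.
have lnW : ln W <= ln (1 - P g - p2 + 2 * M2).
  by rewrite (ler_ln (W0 : W \is Num.pos) (W20 : _ \is Num.pos)).
set S := \sum_(i | P i != 0) P i * (Q i / P i) `^ alpha in HD.
suff main : W `^ be < S.
  have Wb0 : 0 < W `^ be := powR_gt0 be W0.
  have S0 : 0 < S := lt_trans Wb0 main.
  have H : ln (W `^ be) < ln S.
    by rewrite (ltr_ln (Wb0 : _ \is Num.pos) (S0 : S \is Num.pos)).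
  rewrite ln_powR in H.
  have a10 : 0 < (alpha - 1)^-1 by rewrite invr_gt0; clear -a1; lra.
  have H2 : (alpha - 1)^-1 * (be * ln W) < (alpha - 1)^-1 * ln S.
    by rewrite (ltr_pM2l a10).
  have E3 : (alpha - 1)^-1 * (be * ln W) = - ln W.
    by rewrite /be; field; apply/eqP; clear -a1; lra.
  exact: (@fin_contra _ _ _ _ _ _ HD Hb lnW H2 E3).
exact: (@main_ineq _ _ alpha P Q g h a1 P0 P1 Q0 Q1 supp Pg0 Ph0 (Hg h) hg Hqh).
Qed.

Theorem theorem1 (R : realType) (q n : nat) (G : finType) (alpha : R)
    (head : 'M[R]_(q, n) -> 'rV[R]_n -> {ffun G -> R})
    (Rad gamma beta : R) (k : nat) (N : 'M[R]_(q, n) -> R)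
    (f : 'M[R]_(q, n) -> 'rV[R]_n) (x : 'M[R]_(q, n)) :
  1 < alpha ->
  is_norm N ->
  (forall x0 v, is_distr (head x0 v)) ->
  faithful_attention head Rad (fun P Q => renyi_div alpha Q P) gamma beta k N f ->
  (gamma%:E <= renyi_bound alpha (p_top1 (head x (f x))) (p_top2 (head x (f x))))%E ->
  forall x' : 'M[R]_(q, n), N (x - x') <= Rad ->
    forall g : G, is_argmax (head x (f x)) g -> is_argmax (head x' (f x')) g.
Proof.
move=> a1 _ Hd [_ Hf] Hb x' Hx' g Hg h.
have [_ HD] := Hf x x' Hx'.
exact: (@core _ _ alpha gamma _ _ g h a1 (Hd _ _) (Hd _ _) HD Hb Hg).
Qed.
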